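(* Let $P$ be a probability distribution on $\mathbb{R}^d$ supported in $\{x:\|x\|_2\le C\}$. Let $v_1,\dots,v_m\in\mathbb{R}^d$, $w_1,\dots,w_m>0$, $Z_i:=\mathbb E_{X\sim P}\exp(\langle v_i,X\rangle)$, and $$Q_G:=\sum_{i=1}^m\pi_iP_{v_i},\qquad \pi_i:=\frac{w_iZ_i}{\sum_j w_jZ_j}.$$ Let $\eta\in(0,1)$ and suppose $\widehat Z_i\in[(1-\eta)Z_i,(1+\eta)Z_i]$ for all $i$, and let $\widehat\pi_i:=\frac{w_i\widehat Z_i}{\sum_j w_j\widehat Z_j}$. Suppose further that for every $i$, $\widehat P_{v_i}$ is a probability distribution with $\mathcal W_2(\widehat P_{v_i},P_{v_i})\le\epsilon_{\mathrm{lin}}$ and $\operatorname{supp}(\widehat P_{v_i})\subseteq\{x:\|x\|_2\le C\}$. Let $\widehat Q_G:=\sum_{i=1}^m\widehat\pi_i\widehat P_{v_i}$. Then $$\mathcal W_2(\widehat Q_G,Q_G)\le\epsilon_{\mathrm{lin}}+2C\sqrt{\frac{\eta}{1-\eta}}.$$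
   Context: For $v\in\mathbb{R}^d$, $P_v(dx):=\frac{\exp(\langle v,x\rangle)}{Z_P(v)}P(dx)$ with $Z_P(v)=\mathbb E_{X\sim P}\exp(\langle v,X\rangle)$ is the linear exponential tilt of $P$. $\mathcal W_2$ is the Wasserstein-2 distance with Euclidean cost. *)

(* Defs.v *)
From HB Require Import structures.
From mathcomp Require Import all_boot all_order all_algebra.
From mathcomp Require Import all_classical all_reals all_analysis.
Set Implicit Arguments. Unset Strict Implicit. Unset Printing Implicit Defensive.
Import Order.TTheory GRing.Theory Num.Theory.
Import numFieldNormedType.Exports.
Local Open Scope classical_set_scope.
Local Open Scope ring_scope.

Definition Rd (R : realType) (d : nat) :=
  g_sigma_algebraType (@open ('rV[R]_d)).

Definition dotp (R : realType) (d : nat) (v x : 'rV[R]_d) : R :=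
  \sum_(k < d) v 0 k * x 0 k.

Definition enorm (R : realType) (d : nat) (x : 'rV[R]_d) : R :=
  Num.sqrt (\sum_(k < d) x 0 k ^+ 2).

Definition edist (R : realType) (d : nat) (x y : 'rV[R]_d) : R :=
  Num.sqrt (\sum_(k < d) (x 0 k - y 0 k) ^+ 2).

Definition Zpart (R : realType) (d : nat) (P : probability (Rd R d) R)
    (v : 'rV[R]_d) : R :=
  fine (\int[P]_x (expR (dotp v x))%:E)%E.

Definition tilt (R : realType) (d : nat) (P : probability (Rd R d) R)
    (v : 'rV[R]_d) : set (Rd R d) -> \bar R :=
  fun A => ((\int[P]_(x in A) (expR (dotp v x))%:E) * ((Zpart P v)^-1)%:E)%E.

Definition mixture (R : realType) (T : Type) (m : nat) (p : 'I_m -> R)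
    (mu : 'I_m -> set T -> \bar R) : set T -> \bar R :=
  fun A => (\sum_(i < m) (p i)%:E * mu i A)%E.

Definition mixw (R : realType) (m : nat) (w z : 'I_m -> R) (i : 'I_m) : R :=
  w i * z i / \sum_(j < m) w j * z j.

Definition coupling (R : realType) (d : nat) (mu nu : set (Rd R d) -> \bar R)
    (g : probability (Rd R d * Rd R d)%type R) : Prop :=
  (forall A : set (Rd R d), measurable A -> g (A `*` setT) = mu A) /\
  (forall B : set (Rd R d), measurable B -> g (setT `*` B) = nu B).

Definition W2sq (R : realType) (d : nat) (mu nu : set (Rd R d) -> \bar R)
    : \bar R :=
  ereal_inf [set (\int[g]_z (edist z.1 z.2 ^+ 2)%:E)%E
            | g in [set g : probability (Rd R d * Rd R d)%type R
                   | coupling mu nu g]].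

Definition W2 (R : realType) (d : nat) (mu nu : set (Rd R d) -> \bar R)
    : \bar R :=
  sqrte (W2sq mu nu).

(* Main.v *)
Require Import Defs.
From HB Require Import structures.
From mathcomp Require Import all_boot all_order all_algebra.
From mathcomp Require Import all_classical all_reals all_analysis.
From mathcomp Require Import measurable_realfun.
Import Order.TTheory GRing.Theory Num.Theory.
Import numFieldNormedType.Exports.
Set Implicit Arguments. Unset Strict Implicit. Unset Printing Implicit Defensive.
Local Open Scope classical_set_scope.
Local Open Scope ring_scope.
From mathcomp Require Import lra.
Section fmix.
Context d (T : measurableType d) (R : realType).

Lemma max0_ge0 (x : R) : 0 <= Num.max x 0. Proof. by rewrite le_max lexx orbT. Qed.
Definition nngmax (x : R) : {nonneg R} := NngNum (max0_ge0 x).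
Definition fmix_seq {m : nat} (c : 'I_m -> R) (mu : 'I_m -> {measure set T -> \bar R}) :
  {measure set T -> \bar R}^nat :=
  fun n => match @insub nat (fun k => k < m)%N 'I_m n with
           | Some i => (mscale (nngmax (c i)) (mu i) : {measure set T -> \bar R})
           | None => (mzero : {measure set T -> \bar R}) end.

Definition fmix {m} c mu : {measure set T -> \bar R} := msum (@fmix_seq m c mu) m.

Lemma fmix_seqE m (c : 'I_m -> R) (mu : 'I_m -> {measure set T -> \bar R}) (i : 'I_m) : fmix_seq c mu i = mscale (nngmax (c i)) (mu i) :> (set T -> \bar R).
Proof. by rewrite /fmix_seq valK. Qed.

Lemma fmixE m (c : 'I_m -> R) (mu : 'I_m -> {measure set T -> \bar R}) A : fmix c mu A = (\sum_(i < m) (Num.max (c i) 0)%:E * mu i A)%E.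
Proof. rewrite /fmix /msum /=; apply: eq_bigr => i _. by rewrite fmix_seqE. Qed.

Lemma ge0_integral_fmix m (c : 'I_m -> R) (mu : 'I_m -> {measure set T -> \bar R}) (f : T -> \bar R) :
  (forall x, 0 <= f x)%E -> measurable_fun setT f ->
  (\int[fmix c mu]_x f x = \sum_(i < m) (Num.max (c i) 0)%:E * \int[mu i]_x f x)%E.
Proof.
move=> f0 mf; rewrite /fmix ge0_integral_measure_sum //.
apply: eq_bigr => i _; rewrite /fmix_seq valK ge0_integral_mscale //.
Qed.
End fmix.
Section msnd.
Context d1 d2 (T1 : measurableType d1) (T2 : measurableType d2) (R : realType).
Variable g : {measure set (T1 * T2)%type -> \bar R}.
Definition msnd := pushforward g snd.
Let msnd0 : msnd set0 = 0%E.
Proof. by rewrite /msnd /pushforward preimage_set0 measure0. Qed.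
Let msnd_ge0 A : (0 <= msnd A)%E.
Proof. by apply: measure_ge0. Qed.
Let msnd_sigma_additive : semi_sigma_additive msnd.
Proof.
move=> F mF tF mUF; rewrite /msnd /pushforward preimage_bigcup.
apply: measure_semi_sigma_additive.
- by move=> n; rewrite -[X in measurable X]setTI; exact: measurable_snd.
- apply/trivIsetP => /= i j _ _ ij; rewrite -preimage_setI.
  by move/trivIsetP : tF => /(_ _ _ _ _ ij) ->//; rewrite preimage_set0.
- by rewrite -preimage_bigcup -[X in measurable X]setTI; exact: measurable_snd.
Qed.
HB.instance Definition _ := isMeasure.Build _ _ _ msnd msnd0 msnd_ge0 msnd_sigma_additive.
Lemma msndE B : msnd B = g (setT `*` B).
Proof. rewrite /msnd /pushforward; congr (g _); apply/seteqP; split=> -[x y] /=; [by move=> ?; split | by case]. Qed.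
Lemma msndE' B : (msnd : {measure set T2 -> \bar R}) B = g (setT `*` B).
Proof. exact: msndE. Qed.
End msnd.

Lemma maxr0_id (R : realType) (x : R) : 0 <= x -> Num.max x 0 = x.
Proof. rewrite /Num.max; case: ifPn => h; lra. Qed.

Lemma fmixE' d (T : measurableType d) (R : realType) m (c : 'I_m -> R)
  (mu : 'I_m -> {measure set T -> \bar R}) A :
  (forall i, 0 <= c i) -> fmix c mu A = (\sum_(i < m) (c i)%:E * mu i A)%E.
Proof. by move=> c0; rewrite fmixE; apply: eq_bigr => i _; rewrite maxr0_id. Qed.

Lemma mnormE d (T : measurableType d) (R : realType) (mu : {measure set T -> \bar R})
  (P : probability T R) (c : R) A : 0 < c -> mu setT = c%:E ->
  mnormalize mu P A = (mu A * (c^-1)%:E)%E.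
Proof.
move=> c0 hc; rewrite /mnormalize hc /= eqe gt_eqF //.
Qed.

Lemma mnorm_null d (T : measurableType d) (R : realType) (mu : {measure set T -> \bar R})
  (P : probability T R) N : mu N = 0%E -> P N = 0%E -> mnormalize mu P N = 0%E.
Proof.
by move=> h1 h2; rewrite /mnormalize; case: ifPn => _ //; rewrite h1 mul0e.
Qed.

Section build.
Context (R : realType) (d : nat).
Local Notation T := (Rd R d).
Variables (m : nat) (mn p q : 'I_m -> R) (t : R).
Variables (g : 'I_m -> probability (T * T)%type R) (Ph : 'I_m -> probability T R).
Hypothesis mn0 : forall i, 0 <= mn i.
Hypothesis pmn : forall i, 0 <= p i - mn i.
Hypothesis qmn : forall i, 0 <= q i - mn i.
Hypothesis sq : \sum_i (q i - mn i) = t.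
Hypothesis sp : \sum_i (p i - mn i) = t.
Hypothesis sq1 : \sum_i q i = 1.

Definition gm i : {measure set (T * T)%type -> \bar R} := g i.
Definition Phm i : {measure set T -> \bar R} := Ph i.
Definition mu' := fmix (fun i => q i - mn i) Phm.
Definition nu' := fmix (fun i => p i - mn i) (fun i => msnd (gm i)).
Definition mut := mnormalize mu' (dirac (0 : T)).
Definition nut := mnormalize nu' (dirac (0 : T)).
Definition Pi := (mut \x nut)%E.
Definition G1 := fmix mn gm.
Definition G := measure_add G1 (mscale (nngmax t) Pi).
Definition gam := mnormalize G (dirac (0 : T * T)).

Hypothesis hg1 : forall i A, measurable A -> gm i (A `*` setT) = Phm i A.

Lemma t_ge0 : 0 <= t.
Proof. by rewrite -sq; apply: sumr_ge0 => i _; exact: qmn. Qed.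

Lemma fin_prob d' (U : measurableType d') (P : probability U R) A :
  measurable A -> P A = (fine (P A))%:E.
Proof. by move=> mA; rewrite fineK // fin_num_measure. Qed.

Lemma PhmT i : Phm i setT = 1%E.
Proof. exact: probability_setT. Qed.

Lemma Phm_fin i A : measurable A -> Phm i A = (fine (Phm i A))%:E.
Proof. exact: fin_prob. Qed.

Lemma maxt : (nngmax t)%:num = t.
Proof. by rewrite /= maxr0_id //; exact: t_ge0. Qed.

Lemma q_mn_t0 : t = 0 -> forall i, q i = mn i.
Proof.
move=> t0 i; have := @psumr_eq0P _ _ xpredT (fun i => q i - mn i) (fun i _ => qmn i).
rewrite sq t0 => /(_ erefl i erefl) /eqP; rewrite subr_eq0 => /eqP //.
Qed.

Lemma mu'T : mu' setT = t%:E.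
Proof.
rewrite /mu' fmixE' //; under eq_bigr do rewrite PhmT mule1.
by rewrite sumEFin sq.
Qed.

Lemma mutE A : 0 < t -> mut A = (mu' A * (t^-1)%:E)%E.
Proof. by move=> t0; rewrite /mut; apply: mnormE => //; exact: mu'T. Qed.

Lemma G_AT A : measurable A -> G (A `*` setT) = (\sum_i (q i)%:E * Phm i A)%E.
Proof.
move=> mA.
rewrite /G measure_addE /= /mscale maxt [X in (_ + _ * X)%E](_ : _ = mut A * nut setT)%E; last exact: product_measure1E.
rewrite (_ : nut setT = 1%E); last exact: probability_setT.
rewrite mule1 /G1 fmixE' //.
rewrite (eq_bigr (fun i => (mn i)%:E * Phm i A)%E); last by move=> i _; congr (_ * _)%E; exact: hg1.
have [t0|t0] := eqVneq t 0.
  rewrite t0 mul0e adde0; apply: eq_bigr => i _; by rewrite q_mn_t0.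
have tp : 0 < t by rewrite lt_neqAle eq_sym t0 t_ge0.
rewrite mutE // [X in (_ + X)%E]muleCA -EFinM mulfV // mule1 /mu' fmixE' //.
rewrite -big_split /=; apply: eq_bigr => i _.
by rewrite -ge0_muleDl ?lee_fin // -EFinD addrC subrK.
Qed.

Lemma p_mn_t0 : t = 0 -> forall i, p i = mn i.
Proof.
move=> t0 i; have := @psumr_eq0P _ _ xpredT (fun i => p i - mn i) (fun i _ => pmn i).
rewrite sp t0 => /(_ erefl i erefl) /eqP; rewrite subr_eq0 => /eqP //.
Qed.

Lemma gmT i : gm i setT = 1%E.
Proof. exact: probability_setT. Qed.

Lemma nu'T : nu' setT = t%:E.
Proof.
rewrite /nu' fmixE' //; under eq_bigr do rewrite msndE' setXTT gmT mule1.
by rewrite sumEFin sp.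
Qed.

Lemma nutE B : 0 < t -> nut B = (nu' B * (t^-1)%:E)%E.
Proof. by move=> t0; rewrite /nut; apply: mnormE => //; exact: nu'T. Qed.

Lemma G_TB B : measurable B -> G (setT `*` B) = (\sum_i (p i)%:E * gm i (setT `*` B))%E.
Proof.
move=> mB.
rewrite /G measure_addE /= /mscale maxt [X in (_ + _ * X)%E](_ : _ = mut setT * nut B)%E; last exact: product_measure1E.
rewrite (_ : mut setT = 1%E); last exact: probability_setT.
rewrite mul1e /G1 fmixE' //.
have [t0|t0] := eqVneq t 0.
  rewrite t0 mul0e adde0; apply: eq_bigr => i _; by rewrite p_mn_t0.
have tp : 0 < t by rewrite lt_neqAle eq_sym t0 t_ge0.
rewrite nutE // [X in (_ + X)%E]muleCA -EFinM mulfV // mule1 /nu' fmixE' //.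
rewrite -big_split /=; apply: eq_bigr => i _.
have -> : (snd @^-1` B : set (T * T)%type) = [set: T] `*` B.
  by apply/seteqP; split=> -[x y] /=; [by move=> ?; split | by case].
by rewrite -ge0_muleDl ?lee_fin // -EFinD addrC subrK.
Qed.

Lemma GT : G setT = 1%E.
Proof.
rewrite -setXTT G_AT //; under eq_bigr do rewrite PhmT mule1.
by rewrite sumEFin sq1.
Qed.

Lemma gamE A : gam A = G A.
Proof. rewrite /gam (@mnormE _ _ _ G _ 1) //; first by rewrite invr1 mule1.
exact: GT. Qed.

Lemma int_gam (f : (T * T)%type -> \bar R) : (forall z, 0 <= f z)%E -> measurable_fun setT f ->
  (\int[gam]_z f z = \sum_i (mn i)%:E * \int[gm i]_z f z + t%:E * \int[Pi]_z f z)%E.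
Proof.
move=> f0 mf.
rewrite (eq_measure_integral G); last by move=> A mA _; exact: gamE.
rewrite /G ge0_integral_measure_add //.
rewrite /G1 ge0_integral_fmix // ge0_integral_mscale //.
rewrite maxt; congr (_ + _)%E; apply: eq_bigr => i _; by rewrite maxr0_id.
Qed.

Lemma Pi_null (N : set T) : measurable N -> (forall i, Phm i N = 0%E) ->
  (forall i, gm i (setT `*` N) = 0%E) -> ~ N 0 ->
  Pi ((N `*` setT) `|` (setT `*` N)) = 0%E.
Proof.
move=> mN h1 h2 N0.
have mutN : mut N = 0%E.
  rewrite /mut mnorm_null //.
    rewrite /mu' fmixE' //; apply: big1 => i _; by rewrite h1 mule0.
  by change (((\1_N (0:T) : R))%:E = 0%E); rewrite indicE (_ : (0:T) \in N = false) //; apply/negbTE/negP; by rewrite in_setE.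
have nutN : nut N = 0%E.
  rewrite /nut mnorm_null //.
    rewrite /nu' fmixE' //; apply: big1 => i _; by rewrite msndE' h2 mule0.
  by change (((\1_N (0:T) : R))%:E = 0%E); rewrite indicE (_ : (0:T) \in N = false) //; apply/negbTE/negP; by rewrite in_setE.
apply/eqP; rewrite eq_le; apply/andP; split; last exact: measure_ge0.
apply: le_trans (measureU2 _ _ _) _.
- exact: measurableX.
- exact: measurableX.
rewrite [X in (X + _)%E](_ : _ = mut N * nut setT)%E; last exact: product_measure1E.
rewrite [X in (_ + X)%E](_ : _ = mut setT * nut N)%E; last exact: product_measure1E.
by rewrite mutN nutN mul0e mule0 adde0.
Qed.

Lemma PiT : Pi setT = 1%E.
Proof.
rewrite -setXTT [LHS](_ : _ = mut setT * nut setT)%E; last exact: product_measure1E.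
rewrite (_ : mut setT = 1%E); last exact: probability_setT.
rewrite (_ : nut setT = 1%E); last exact: probability_setT.
by rewrite mule1.
Qed.
End build.
Lemma mcoord (R : realType) d (k : 'I_d) :
  measurable_fun [set: Rd R d] (fun x : Rd R d => (x : 'rV[R]_d) 0 k).
Proof.
apply: (measurability _ (RGenOpens.measurableE R)) => _ [_ [a [b ->]] <-].
apply: sub_sigma_algebra; rewrite setTI.
apply: (proj1 (continuousP _) (@coord_continuous R 1 d 0 k)).
exact: interval_open.
Qed.

Lemma msumsq (R : realType) d :
  measurable_fun [set: Rd R d] (fun x : Rd R d => \sum_(k < d) (x : 'rV[R]_d) 0 k ^+ 2).
Proof.
apply: measurable_sum => k; apply: measurable_funX; exact: mcoord.
Qed.

Lemma mcost (R : realType) d :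
  measurable_fun [set: (Rd R d * Rd R d)%type]
    (fun z : (Rd R d * Rd R d)%type => \sum_(k < d) ((z.1 : 'rV[R]_d) 0 k - (z.2 : 'rV[R]_d) 0 k) ^+ 2).
Proof.
apply: measurable_sum => k; apply: measurable_funX; apply: measurable_funB.
- apply: (@measurableT_comp _ _ _ _ _ _ (fun x : Rd R d => (x : 'rV[R]_d) 0 k) _ fst); [exact: mcoord | exact: measurable_fst].
- apply: (@measurableT_comp _ _ _ _ _ _ (fun x : Rd R d => (x : 'rV[R]_d) 0 k) _ snd); [exact: mcoord | exact: measurable_snd].
Qed.

Section Zsec.
Context (R : realType) (d : nat) (P : probability (Rd R d) R) (C : R).
Hypothesis hB : P [set x : Rd R d | enorm x <= C] = 1%E.
Local Notation B := [set x : Rd R d | enorm x <= C].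

Let PBm : (P : {measure set (Rd R d) -> \bar R}) B = 1%E := hB.

Lemma C_ge0 : 0 <= C.
Proof.
rewrite leNgt; apply/negP => C0.
have e : B = set0.
  apply/seteqP; split => x //= hx; move: (le_lt_trans hx C0).
  by rewrite /enorm ltNge sqrtr_ge0.
by move: hB; rewrite e measure0 => /eqP; rewrite eq_sym onee_eq0.
Qed.

Lemma enorm_leE (x : Rd R d) : (enorm x <= C) = (\sum_(k < d) (x : 'rV[R]_d) 0 k ^+ 2 <= C ^+ 2).
Proof.
rewrite /enorm -{1}(ger0_norm C_ge0) -sqrtr_sqr ler_sqrt //.
exact: sqr_ge0.
Qed.

Lemma mB : measurable B.
Proof.
have := @msumsq R d measurableT _ (measurable_itv `]-oo, C ^+ 2]).
rewrite setTI; congr measurable; apply/seteqP; split => x /=;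
  by rewrite enorm_leE in_itv /=.
Qed.

Lemma coord_le (x : Rd R d) k : enorm x <= C -> `|(x : 'rV[R]_d) 0 k| <= C.
Proof.
rewrite enorm_leE => h.
rewrite -(ger0_norm C_ge0) -sqrtr_sqr -[`|_|]sqrtr_sqr ler_sqrt ?sqr_ge0 //.
apply: le_trans h; rewrite (bigD1 k) //= lerDl.
by apply: sumr_ge0 => j _; exact: sqr_ge0.
Qed.

Definition Kb (v : 'rV[R]_d) := \sum_(k < d) `|v 0 k| * C.

Lemma dotp_bound v (x : Rd R d) : enorm x <= C -> `|dotp v x| <= Kb v.
Proof.
move=> hx; rewrite /dotp /Kb; apply: le_trans (ler_norm_sum _ _ _) _.
apply: ler_sum => k _; rewrite normrM; apply: ler_wpM2l => //.
exact: coord_le.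
Qed.

Lemma mdotp v : measurable_fun [set: Rd R d] (fun x : Rd R d => dotp v x).
Proof.
rewrite /dotp; apply: measurable_sum => k; apply: measurable_funM => //.
exact: mcoord.
Qed.

Lemma mexpdotp v : measurable_fun [set: Rd R d] (fun x : Rd R d => (expR (dotp v x))%:E).
Proof.
apply/measurable_EFinP; apply: (@measurableT_comp _ _ _ _ _ _ expR _ (fun x : Rd R d => dotp v x)); [exact: measurable_expR | exact: mdotp].
Qed.

Lemma int_B v : (\int[P]_x (expR (dotp v x))%:E = \int[P]_(x in B) (expR (dotp v x))%:E)%E.
Proof.
have mCB : measurable (~` B) by apply: measurableC; exact: mB.
have PCB : P (~` B) = 0%E by rewrite probability_setC ?hB ?subee //; exact: mB.
rewrite (@ge0_negligible_integral _ _ _ P setT (~` B) _ mCB measurableT (mexpdotp v) _ PCB).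
  by rewrite setTD setCK.
by move=> x _; rewrite lee_fin expR_ge0.
Qed.

Lemma Zpart_prop v : (\int[P]_x (expR (dotp v x))%:E = (Zpart P v)%:E)%E /\
   expR (- Kb v) <= Zpart P v.
Proof.
have h1 : ((expR (- Kb v))%:E <= \int[P]_x (expR (dotp v x))%:E)%E.
  rewrite int_B.
  have := @ge0_le_integral _ _ _ P B mB (cst (expR (- Kb v))%:E) (fun x => (expR (dotp v x))%:E).
  rewrite integral_cst; last exact: mB.
  rewrite PBm mule1 => H; apply: H.
  - by move=> x _; rewrite lee_fin expR_ge0.
  - exact: measurable_cst.
  - exact: measurable_funS (mexpdotp v).
  - move=> x /= hx; rewrite lee_fin ler_expR lerNl.
    have := dotp_bound v hx; rewrite -normrN; apply: le_trans; exact: ler_norm.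
have h2 : (\int[P]_x (expR (dotp v x))%:E <= (expR (Kb v))%:E)%E.
  rewrite int_B.
  have := @ge0_le_integral _ _ _ P B mB (fun x => (expR (dotp v x))%:E) (cst (expR (Kb v))%:E).
  rewrite integral_cst; last exact: mB.
  rewrite PBm mule1 => H; apply: H.
  - by move=> x _; rewrite lee_fin expR_ge0.
  - exact: measurable_funS (mexpdotp v).
  - exact: measurable_cst.
  - move=> x /= hx; rewrite lee_fin ler_expR.
    by apply: le_trans _ (dotp_bound v hx); rewrite ler_norm.
have hf : (\int[P]_x (expR (dotp v x))%:E)%E \is a fin_num.
  rewrite ge0_fin_numE; first by apply: le_lt_trans h2 _; rewrite ltry.
  by apply: le_trans h1; rewrite lee_fin expR_ge0.
rewrite /Zpart fineK //; split => //.
by rewrite -lee_fin fineK.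
Qed.

Lemma Zpart_gt0 v : 0 < Zpart P v.
Proof. by apply: lt_le_trans (proj2 (Zpart_prop v)); rewrite expR_gt0. Qed.

Lemma tilt_nullB v : tilt P v (~` B) = 0%E.
Proof.
rewrite /tilt null_set_integral ?mul0e //.
- apply: measurableC; exact: mB.
- exact: measurable_funS (mexpdotp v).
- have PCB : P (~` B) = 0%E by rewrite probability_setC ?hB ?subee //; exact: mB.
  exact: PCB.
Qed.
End Zsec.
Lemma min_case (R : realType) (x y : R) : (x - Num.min x y = Num.max (x - y) 0).
Proof.
rewrite /Num.min /Num.max; case: ifPn => h; case: ifPn => h2; lra.
Qed.

Lemma min_case' (R : realType) (x y : R) : (y - Num.min x y = Num.max (y - x) 0).
Proof.
rewrite /Num.min /Num.max; case: ifPn => h; case: ifPn => h2; lra.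
Qed.

Lemma weights (R : realType) m (w Z Zh : 'I_m -> R) (eta : R) :
  (0 < m)%N -> (forall i, 0 < w i) -> (forall i, 0 < Z i) -> 0 < eta < 1 ->
  (forall i, (1 - eta) * Z i <= Zh i <= (1 + eta) * Z i) ->
  [/\ (forall i, 0 <= mixw w Z i), (forall i, 0 <= mixw w Zh i),
      \sum_i mixw w Z i = 1, \sum_i mixw w Zh i = 1 &
      \sum_i (mixw w Zh i - Num.min (mixw w Z i) (mixw w Zh i)) =
      \sum_i (mixw w Z i - Num.min (mixw w Z i) (mixw w Zh i)) /\
      \sum_i (mixw w Z i - Num.min (mixw w Z i) (mixw w Zh i)) <= eta / (1 - eta)].
Proof.
move=> m0 w0 Z0 /andP[e0 e1] hZ.
have Zh0 i : 0 < Zh i.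
  have := hZ i => /andP[h _]; apply: lt_le_trans h; apply: mulr_gt0 => //; lra.
set a := fun i => w i * Z i; set ah := fun i => w i * Zh i.
have a0 i : 0 < a i by apply: mulr_gt0.
have ah0 i : 0 < ah i by apply: mulr_gt0.
have hah i : (1 - eta) * a i <= ah i <= (1 + eta) * a i.
  have := hZ i => /andP[h1 h2]; rewrite /a /ah; apply/andP; split.
  - by rewrite mulrCA ler_wpM2l // ltW.
  - by rewrite mulrCA ler_wpM2l // ltW.
set s := \sum_i a i; set sh := \sum_i ah i.
have pos_sum (f : 'I_m -> R) : (forall i, 0 < f i) -> 0 < \sum_i f i.
  move=> f0; rewrite (bigD1 (Ordinal m0)) //=.
  have h1 := f0 (Ordinal m0).
  have h2 : 0 <= \sum_(i < m | i != Ordinal m0) f i by apply: sumr_ge0 => i _; exact: ltW.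
  lra.
have s0 : 0 < s by exact: pos_sum.
have sh0 : 0 < sh by exact: pos_sum.
have hs : (1 - eta) * s <= sh.
  rewrite /s /sh mulr_sumr; apply: ler_sum => i _; by case/andP: (hah i).
have pE i : mixw w Z i = a i / s by [].
have qE i : mixw w Zh i = ah i / sh by [].
have p0 i : 0 <= mixw w Z i by rewrite pE divr_ge0 // ltW.
have q0 i : 0 <= mixw w Zh i by rewrite qE divr_ge0 // ltW.
have sp : \sum_i mixw w Z i = 1.
  by rewrite (eq_bigr _ (fun i _ => pE i)) -mulr_suml divff // gt_eqF.
have sq : \sum_i mixw w Zh i = 1.
  by rewrite (eq_bigr _ (fun i _ => qE i)) -mulr_suml divff // gt_eqF.
have eqt : \sum_i (mixw w Zh i - Num.min (mixw w Z i) (mixw w Zh i)) =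
      \sum_i (mixw w Z i - Num.min (mixw w Z i) (mixw w Zh i)).
  by rewrite !sumrB sp sq.
split => //; split => //.
have key : s / sh <= (1 - eta)^-1.
  have u : 0 < 1 - eta by lra.
  rewrite ler_pdivrMr // -(ler_pM2l u) mulrA mulfV ?mul1r //; lra.
have fin : \sum_i eta * a i / sh <= eta / (1 - eta).
  rewrite -mulr_suml -mulr_sumr -/s -mulrA ler_wpM2l //; lra.
apply: le_trans fin.
have ish0 : 0 < sh^-1 by rewrite invr_gt0.
have is0 : 0 < s^-1 by rewrite invr_gt0.
case: (leP sh s) => hss.
- apply: ler_sum => i _; rewrite min_case pE qE ge_max; apply/andP; split; last first.
    exact: divr_ge0 (mulr_ge0 (ltW e0) (ltW (a0 i))) (ltW sh0).
  have h1 : s^-1 <= sh^-1 by rewrite lef_pV2 // posrE.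
  have h2 : a i * s^-1 <= a i * sh^-1 by rewrite ler_wpM2l // ltW.
  have := hah i => /andP[h3 _].
  have h4 : (1 - eta) * a i * sh^-1 <= ah i * sh^-1 by rewrite ler_wpM2r // ltW.
  rewrite -mulrA; nra.
- rewrite -eqt; apply: ler_sum => i _; rewrite min_case' pE qE ge_max; apply/andP; split; last first.
    exact: divr_ge0 (mulr_ge0 (ltW e0) (ltW (a0 i))) (ltW sh0).
  have h1 : s^-1 >= sh^-1 by rewrite lef_pV2 // ?posrE // ltW.
  have h2 : a i * s^-1 >= a i * sh^-1 by rewrite ler_wpM2l // ltW.
  have := hah i => /andP[_ h3].
  have h4 : (1 + eta) * a i * sh^-1 >= ah i * sh^-1 by rewrite ler_wpM2r // ltW.
  rewrite -mulrA; nra.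
Qed.

Unset Implicit Arguments.

Theorem lemmaB1 (R : realType) (d m : nat) (P : probability (Rd R d) R)
  (C : R) (v : 'I_m -> 'rV[R]_d) (w : 'I_m -> R) (eta eps_lin : R)
  (Zhat : 'I_m -> R) (Phat : 'I_m -> probability (Rd R d) R) :
  (0 < m)%N ->
  P [set x : Rd R d | enorm x <= C] = 1%E ->
  (forall i, 0 < w i) ->
  0 < eta < 1 ->
  (forall i, (1 - eta) * Zpart P (v i) <= Zhat i <= (1 + eta) * Zpart P (v i)) ->
  (forall i, (W2 (Phat i) (tilt P (v i)) <= eps_lin%:E)%E) ->
  (forall i, Phat i [set x : Rd R d | enorm x <= C] = 1%E) ->
  (W2 (mixture (mixw w Zhat) Phat)
      (mixture (mixw w (fun i => Zpart P (v i))) (fun i => tilt P (v i)))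
   <= (eps_lin + 2 * C * Num.sqrt (eta / (1 - eta)))%:E)%E.
Proof.
move=> hm hB hw he hZ hW hPh.
have C0 := C_ge0 hB.
have Z0 i : 0 < Zpart P (v i) by exact: Zpart_gt0 hB (v i).
have [p0 q0 sp1 sq1 [eqt tle]] := weights hm hw Z0 he hZ.
set p := mixw w (fun i => Zpart P (v i)) in p0 sp1 eqt tle *.
set q := mixw w Zhat in q0 sq1 eqt tle *.
set mn := fun i => Num.min (p i) (q i).
set t := \sum_i (p i - mn i).
set th := eta / (1 - eta).
have e0 : 0 <= eps_lin.
  by have := le_trans (sqrte_ge0 _) (hW (Ordinal hm)); rewrite lee_fin.
have th0 : 0 <= th by rewrite /th; case/andP: he => ? ?; apply: divr_ge0; lra.
have hW2 i : (W2sq (Phat i) (tilt P (v i)) <= (eps_lin ^+ 2)%:E)%E.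
  rewrite -lee_sqrt ?lee_fin ?sqr_ge0 //= sqrtr_sqr ger0_norm //; exact: hW.
have key : forall del, 0 < del -> (W2sq (mixture q Phat)
      (mixture p (fun i => tilt P (v i))) <= (eps_lin ^+ 2 + 4 * C ^+ 2 * th + del)%:E)%E.
  move=> del del0.
  have ex i : exists g : probability (Rd R d * Rd R d)%type R,
     coupling (Phat i) (tilt P (v i)) g /\
     (\int[g]_z (Defs.edist z.1 z.2 ^+ 2)%:E <= (eps_lin ^+ 2 + del)%:E)%E.
    have : (W2sq (Phat i) (tilt P (v i)) < (eps_lin ^+ 2 + del)%:E)%E.
      by apply: le_lt_trans (hW2 i) _; rewrite lte_fin ltrDl.
    rewrite /W2sq => /ereal_inf_lt [y [g hg <-] hy].
    by exists g; split => //; exact: ltW.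
  have [gg hgg] := choice ex.
  have mn0 i : 0 <= mn i.
    by rewrite /mn /Num.min; case: ifPn => _; [exact: p0 | exact: q0].
  have pmn i : 0 <= p i - mn i by rewrite /mn min_case le_max lexx orbT.
  have qmn i : 0 <= q i - mn i by rewrite /mn min_case' le_max lexx orbT.
  have hg1 i A : measurable A -> gm gg i (A `*` setT) = Phm Phat i A.
    by move=> mA; exact: (proj1 (proj1 (hgg i)) A mA).
  have hg2 i B : measurable B -> gm gg i (setT `*` B) = tilt P (v i) B.
    by move=> mB0; exact: (proj2 (proj1 (hgg i)) B mB0).
  pose gamma := gam mn p q t gg Phat.
  have cpl : coupling (mixture q Phat) (mixture p (fun i => tilt P (v i))) gamma.
    split.
    - move=> A mA; apply: eq_trans (gamE p mn0 qmn eqt sq1 hg1 (A `*` setT)) _.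
      by rewrite (G_AT p mn0 qmn eqt hg1 mA).
    - move=> B mB0; apply: eq_trans (gamE p mn0 qmn eqt sq1 hg1 (setT `*` B)) _.
      rewrite (G_TB gg Phat mn0 pmn qmn eqt erefl mB0).
      by rewrite /mixture; apply: eq_bigr => i _; rewrite hg2.
  apply: le_trans (_ : (\int[gamma]_z (Defs.edist z.1 z.2 ^+ 2)%:E <= _)%E).
    by apply: ereal_inf_lbound; exists gamma.
  pose cf := fun z : (Rd R d * Rd R d)%type =>
    \sum_(k < d) ((z.1 : 'rV[R]_d) 0 k - (z.2 : 'rV[R]_d) 0 k) ^+ 2.
  have fE : (fun z : (Rd R d * Rd R d)%type => (Defs.edist z.1 z.2 ^+ 2)%:E) =
            (fun z => (cf z)%:E).
    apply/funext => z; rewrite /Defs.edist sqr_sqrtr //.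
    by apply: sumr_ge0 => k _; exact: sqr_ge0.
  have mcf : measurable_fun setT (fun z => (cf z)%:E).
    by apply/measurable_EFinP; exact: mcost.
  have cf0 z : (0 <= (cf z)%:E)%E.
    by rewrite lee_fin; apply: sumr_ge0 => k _; exact: sqr_ge0.
  rewrite fE.
  rewrite (int_gam p mn0 qmn eqt sq1 hg1 cf0 mcf).
  have hPi : (\int[Pi mn p q gg Phat]_z (cf z)%:E <= (4 * C ^+ 2)%:E)%E.
    pose B := [set x : Rd R d | enorm x <= C].
    have mBB : measurable B by exact: mB hB.
    have mCB : measurable (~` B) by exact: measurableC.
    pose N := (~` B `*` setT) `|` (setT `*` ~` B).
    have PiN : Pi mn p q gg Phat N = 0%E.
      apply: (Pi_null pmn qmn mCB).
      - move=> i; have : Phat i (~` B) = 0%E.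
          by rewrite probability_setC ?hPh ?subee.
        by [].
      - move=> i; rewrite hg2 //; exact: tilt_nullB hB (v i).
      - move=> /=; apply; rewrite /B /= /enorm (_ : \sum_(k < d) _ = 0) ?sqrtr0 //.
        by apply: big1 => k _; rewrite mxE expr0n.
    have hb : forall z : (Rd R d * Rd R d)%type, B z.1 -> B z.2 -> cf z <= 4 * C ^+ 2.
      move=> z; rewrite /B /= !(enorm_leE hB) => h1 h2.
      apply: le_trans (_ : \sum_(k < d) (2 * (z.1 : 'rV[R]_d) 0 k ^+ 2 + 2 * (z.2 : 'rV[R]_d) 0 k ^+ 2) <= _).
        apply: ler_sum => k _.
        have := sqr_ge0 ((z.1 : 'rV[R]_d) 0 k + (z.2 : 'rV[R]_d) 0 k); nra.
      rewrite big_split /= -!mulr_sumr; lra.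
    have := @ae_ge0_le_integral _ _ _ (Pi mn p q gg Phat) setT measurableT
      (fun z => (cf z)%:E) (cst (4 * C ^+ 2)%:E) (fun z _ => cf0 z) mcf _ (measurable_cst _).
    rewrite integral_cst // [X in (_ * X)%E](_ : _ = 1%E) ?mule1; last exact: PiT.
    apply.
    - move=> z _; rewrite lee_fin; apply: mulr_ge0 => //; exact: sqr_ge0.
    - exists N; split => //.
        by apply: measurableU; apply: measurableX.
      move=> z /= hz.
      have [h1|h1] := pselect (B z.1); last by left.
      have [h2|h2] := pselect (B z.2); last by right.
      exfalso; apply: hz => _; rewrite lee_fin; exact: hb.
  have hgi i : (\int[gm gg i]_z (cf z)%:E <= (eps_lin ^+ 2 + del)%:E)%E.
    by have := proj2 (hgg i); rewrite fE.
  have t0 : 0 <= t by apply: sumr_ge0 => i _; exact: pmn.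
  have smn : \sum_i mn i = 1 - t.
    have : t = \sum_i p i - \sum_i mn i by rewrite /t sumrB.
    rewrite sp1; lra.
  apply: le_trans.
    apply: leeD.
      apply: lee_sum => i _; apply: lee_wpmul2l; first by rewrite lee_fin.
      exact: hgi.
    apply: lee_wpmul2l; first by rewrite lee_fin.
    exact: hPi.
  under eq_bigr do rewrite -EFinM.
  rewrite sumEFin -EFinM -EFinD lee_fin -mulr_suml smn.
  have : t <= th by exact: tle.
  have : 0 <= C ^+ 2 by exact: sqr_ge0.
  have : 0 <= eps_lin ^+ 2 + del by apply: addr_ge0; [exact: sqr_ge0 | exact: ltW].
  rewrite -/mn -/t; nra.
have Wsq : (W2sq (mixture q Phat) (mixture p (fun i => tilt P (v i))) <= (eps_lin ^+ 2 + 4 * C ^+ 2 * th)%:E)%E.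
  by apply/lee_addgt0Pr => del del0; rewrite -EFinD; exact: key.
have pos : (0 <= (eps_lin ^+ 2 + 4 * C ^+ 2 * th)%:E)%E.
  rewrite lee_fin; apply: addr_ge0; first exact: sqr_ge0.
  by apply: mulr_ge0 => //; apply: mulr_ge0 => //; exact: sqr_ge0.
have h1 := Wsq; rewrite -(lee_sqrt _ pos) in h1.
rewrite /W2; apply: le_trans h1 _.
rewrite /= lee_fin -(ger0_norm (x := eps_lin + 2 * C * Num.sqrt th)); last first.
  by apply: addr_ge0 => //; apply: mulr_ge0; [apply: mulr_ge0 => //| exact: sqrtr_ge0].
rewrite -sqrtr_sqr ler_sqrt; last exact: sqr_ge0.
have s0 := sqrtr_ge0 th.
have ss : Num.sqrt th ^+ 2 = th by rewrite sqr_sqrtr.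
move: s0 ss; set s := Num.sqrt th => s0 ss; rewrite -ss.
have h3 : 0 <= eps_lin * C * s by rewrite mulr_ge0 ?mulr_ge0.
nra.
Qed.
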